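(* If $G$ is a $2$-connected graph of order $n$ with girth $g$, then $F_c(G)\le n-g+2$.
   Context: Forcing process: given a set of initially colored vertices, at each step a colored vertex with exactly one non-colored neighbor forces (colors) that neighbor. A set $S\subseteq V(G)$ is a forcing set if iterating this process from $S$ eventually colors all vertices; it is a connected forcing set if moreover the induced subgraph $G[S]$ is connected. $F_c(G)$ is the minimum cardinality of a connected forcing set of $G$. The girth of $G$ is the length of a shortest cycle in $G$. *)

(* Defs.v *)
From mathcomp Require Import all_boot.
Set Implicit Arguments. Unset Strict Implicit. Unset Printing Implicit Defensive.

Definition simple_graph (T : finType) (e : rel T) : Prop :=
  symmetric e /\ irreflexive e.

Definition induced (T : finType) (e : rel T) (S : {set T}) : rel T :=
  [rel x y | [&& x \in S, y \in S & e x y]].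

Definition connected_on (T : finType) (e : rel T) (S : {set T}) : Prop :=
  forall x y, x \in S -> y \in S -> connect (induced e S) x y.

Definition connected_graph (T : finType) (e : rel T) : Prop :=
  connected_on e [set: T].

Definition two_connected (T : finType) (e : rel T) : Prop :=
  [/\ 3 <= #|T|, connected_graph e & forall v : T, connected_on e [set~ v]].

Definition is_cycle (T : finType) (e : rel T) (s : seq T) : Prop :=
  [/\ 3 <= size s, uniq s & cycle e s].

Definition is_girth (T : finType) (e : rel T) (g : nat) : Prop :=
  (exists s, is_cycle e s /\ size s = g) /\
  (forall s, is_cycle e s -> g <= size s).

Definition force_step (T : finType) (e : rel T) (S : {set T}) : {set T} :=
  S :|: [set v | [exists u, [&& u \in S, v \notin S, e u v &
                  [forall w, e u w ==> (w \in S) || (w == v)]]]].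

(* the final colored set (the process stabilises after at most #|T| rounds) *)
Definition closure (T : finType) (e : rel T) (S : {set T}) : {set T} :=
  iter #|T| (force_step e) S.

Definition forcing_set (T : finType) (e : rel T) (S : {set T}) : Prop :=
  closure e S = [set: T].

Definition connected_forcing_set (T : finType) (e : rel T) (S : {set T}) : Prop :=
  forcing_set e S /\ connected_on e S.

(* Main.v *)
Require Import Defs.
From mathcomp Require Import all_boot.
From mathcomp Require Import zify.
From Stdlib Require Import Classical.
Set Implicit Arguments. Unset Strict Implicit. Unset Printing Implicit Defensive.

Section G.
Variables (T : finType) (e : rel T).
Hypothesis esym : symmetric e.
Hypothesis eirr : irreflexive e.
Implicit Types (A B C Y : {set T}) (x y z : T).

Lemma induced_sym A : symmetric (induced e A).
Proof.
move=> x y; rewrite /induced /= esym.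
by case: (x \in A); case: (y \in A).
Qed.

Lemma csym A x y : connect (induced e A) x y = connect (induced e A) y x.
Proof. exact: (sym_connect_sym (induced_sym A)). Qed.

Lemma path_in A x p : path (induced e A) x p -> all (mem A) p.
Proof.
elim: p x => //= z p IH x /andP [/and3P [_ zA _] pth].
by rewrite zA (IH z pth).
Qed.

Lemma connect_in A x y : x \in A -> connect (induced e A) x y -> y \in A.
Proof.
move=> xA /connectP [p pth ->].
elim: p x xA pth => //= z p IH x xA /andP [/and3P [_ zA _] pth].
exact: IH pth.
Qed.

Lemma connect_mono A B x y : A \subset B ->
  connect (induced e A) x y -> connect (induced e B) x y.
Proof.
move=> /subsetP AB; apply: connect_sub => u v /and3P [uA vA uv].
by apply: connect1; rewrite /induced /= uv !AB.
Qed.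

Lemma connect_restrict A B x y :
  connect (induced e A) x y -> (forall u, connect (induced e A) x u -> u \in B) ->
  connect (induced e (A :&: B)) x y.
Proof.
move=> /connectP [p pth ->] HB.
apply/connectP; exists p => //.
have : all (mem B) (x :: p).
  by apply/allP => u /(path_connect pth) /HB.
elim: p x pth {HB} => //= z p IH x /andP [/and3P [xA zA xz] pth] /and3P [xB zB allp].
rewrite /induced /= !inE xA zA xz xB zB /=.
by apply: IH => //=; rewrite zB.
Qed.

Lemma avoid A z y t : connect (induced e A) y t -> ~~ connect (induced e A) y z ->
  connect (induced e (A :\ z)) y t.
Proof.
move=> yt nyz.
have := connect_restrict (B := [set~ z]) yt.
move=> H; apply: (connect_mono _ (H _)).
  by apply/subsetP => u; rewrite !inE => /andP [-> ->]; rewrite andbT.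
move=> u yu; rewrite !inE; apply/negP => /eqP uz.
by rewrite -uz yu in nyz.
Qed.

Lemma exit_edge (r : rel T) (C : {set T}) x p :
  path r x p -> x \in C -> last x p \notin C ->
  exists u v, [/\ u \in x :: p, u \in C, v \notin C & r u v].
Proof.
elim: p x => [|z p IH] x /=; first by move=> _ ->.
move=> /andP [xz pth] xC lC.
case: (boolP (z \in C)) => zC.
- have [u [v [H1 H2 H3 H4]]] := IH z pth zC lC.
  by exists u, v; split=> //; rewrite inE H1 orbT.
- by exists x, z; split=> //; rewrite inE eqxx.
Qed.

Lemma first_step A x y : connect (induced e A) x y -> x != y ->
  exists a, induced e A x a.
Proof.
move=> /connectP [[|a p] pth ->]; first by rewrite eqxx.
by move=> _; exists a; case/andP: pth.
Qed.

Lemma not_conn A : ~ connected_on e A ->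
  exists x y, [/\ x \in A, y \in A & ~~ connect (induced e A) x y].
Proof.
move=> H; apply: NNPP => H'; apply: H => x y xA yA.
apply: NNPP => nc; apply: H'; exists x, y; split => //; exact/negP.
Qed.

Hypothesis two : two_connected e.

Lemma deg2 v : exists a b, [/\ a != b, e v a & e v b].
Proof.
case: two => n3 conn cut.
have ex2 (a b : T) : exists w, w \notin [set a; b].
  have : ~: [set a; b] != set0.
    rewrite -card_gt0; have := cardsC [set a; b]; have := cards2 a b.
    case: (a != b) => /= ->; move=> H; move: n3; rewrite -H; lia.
  by case/set0Pn => w; rewrite inE => ?; exists w.
have [w wn] := ex2 v v.
have vw : v != w by apply/negP => /eqP vw; move: wn; rewrite vw !inE eqxx.
have [a /and3P [_ _ va]] := first_step (conn v w (in_setT _) (in_setT _)) vw.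
have [w' wn'] := ex2 v a.
have av : v != a by apply/negP => /eqP av; rewrite av eirr in va.
have vin : v \in [set~ a] by rewrite !inE av.
have w'in : w' \in [set~ a] by move: wn'; rewrite !inE negb_or => /andP [_ ->].
have vw' : v != w' by move: wn'; rewrite !inE negb_or eq_sym => /andP [-> _].
have [b /and3P [_ bin vb]] := first_step (cut a v w' vin w'in) vw'.
exists a, b; split => //; move: bin; rewrite !inE eq_sym; exact.

Qed.

Definition comp (Y : {set T}) z x := [set y | connect (induced e (Y :\ z)) x y].

Lemma comp_in Y z x y : x \in Y :\ z -> y \in comp Y z x -> y \in Y :\ z.
Proof. by move=> xY; rewrite inE => /(connect_in xY). Qed.

Lemma subA Y z x : z \in Y -> x \in Y :\ z -> (exists w, w \notin Y) ->
  exists2 z', z' \in comp Y z x & exists2 w, w \notin Y & e z' w.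
Proof.
move=> zY xY [w0 w0Y].
case: two => _ _ cut.
have xz : x \in [set~ z] by move: xY; rewrite !inE => /andP [-> _].
have w0z : w0 \in [set~ z].
  by rewrite !inE; apply/negP => /eqP w0z; rewrite w0z zY in w0Y.
have /connectP [p pth lp] := cut z x w0 xz w0z.
have xC : x \in comp Y z x by rewrite inE connect0.
have lC : last x p \notin comp Y z x.
  by rewrite -lp; apply/negP => /(comp_in xY); rewrite inE (negbTE w0Y) andbF.
have [u [v [_ uC vC /and3P [_ vz uv]]]] := exit_edge pth xC lC.
exists u => //; exists v => //.
apply/negP => vY; move: vC; rewrite inE => /negP; apply.
move: (uC); rewrite inE => xu.
apply: connect_trans xu _; apply: connect1.
have := comp_in xY uC.
move: vz; rewrite /induced /= !inE => -> ->; by rewrite vY uv.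
Qed.

Lemma subB Y z x z' : connected_on e Y -> z \in Y -> x \in Y :\ z ->
  z' \in comp Y z x -> ~ connected_on e (Y :\ z') ->
  exists2 y, y \in Y :\ z' & comp Y z' y \proper comp Y z x.
Proof.
move=> cY zY xY z'C nc.
have z'Y := comp_in xY z'C.
have zz' : z != z' by move: z'Y; rewrite !inE eq_sym => /andP [].
have zY' : z \in Y :\ z' by rewrite !inE zz' zY.
set R := induced e (Y :\ z').
have [y [yY ncyz]] : exists y, y \in Y :\ z' /\ ~~ connect R y z.
  have [a [b [aY bY nab]]] := not_conn nc.
  case: (boolP (connect R a z)) => az; last by exists a.
  case: (boolP (connect R b z)) => bz; last by exists b.
  by move: nab; rewrite (connect_trans az) // csym.
have yC : y \in comp Y z x.
  case: (boolP (y \in comp Y z x)) => // nyC.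
  have yY0 : y \in Y by move: yY; rewrite inE => /andP [].
  have /connectP [p pth lp] := cY y z yY0 zY.
  set C := [set u | connect R y u].
  have yinC : y \in C by rewrite inE connect0.
  have lC : last y p \notin C by rewrite -lp inE.
  have [u [v [_ uC vC /and3P [uY vY uv]]]] := exit_edge pth yinC lC.
  have uY' : u \in Y :\ z' by move: uC; rewrite inE => /(connect_in yY).
  have vz' : v = z'.
    case: (eqVneq v z') => // vz'; exfalso.
    move: vC; rewrite inE => /negP; apply.
    move: (uC); rewrite inE => yu; apply: connect_trans yu _; apply: connect1.
    by rewrite /R /induced /= uY' !inE vz' vY uv.
  have uz : u != z by apply/negP => /eqP uz; move: uC; rewrite inE uz (negbTE ncyz).
  have uCx : u \in comp Y z x.
    move: z'C; rewrite !inE => xz'; apply: connect_trans xz' _; apply: connect1.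
    rewrite /induced /= esym -vz' uv andbT.
    move: z'Y; rewrite -vz' !inE => /andP [-> ->]; by rewrite uz uY.
  move: uCx; rewrite !inE => xu; move/negP: nyC => nyC; exfalso; apply: nyC; rewrite inE; apply: connect_trans xu _.
  rewrite csym; apply: (connect_mono _ (avoid _ ncyz)); last by move: uC; rewrite inE.
  by apply/subsetP => t; rewrite !inE => /and3P [-> _ ->].
exists y => //; apply/properP; split.
  apply/subsetP => t; rewrite !inE => yt.
  move: yC; rewrite inE => xy; apply: connect_trans xy _.
  apply: (connect_mono _ (avoid yt ncyz)).
  by apply/subsetP => u; rewrite !inE => /and3P [-> _ ->].
exists z' => //; apply/negP => /(comp_in yY); by rewrite !inE eqxx.
Qed.

Lemma claim Y : connected_on e Y -> (exists w, w \notin Y) -> 1 < #|Y| ->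
  exists z, [/\ z \in Y, (exists2 w, w \notin Y & e z w) & connected_on e (Y :\ z)].
Proof.
move=> cY exw Y2.
have [z zY] : exists z, z \in Y by apply/set0Pn; rewrite -card_gt0; lia.
have [x xY] : exists x, x \in Y :\ z.
  by apply/set0Pn; rewrite -card_gt0; move: Y2; rewrite (cardsD1 z Y) zY; lia.
suff H : forall n z x, z \in Y -> x \in Y :\ z -> #|comp Y z x| <= n ->
  exists z, [/\ z \in Y, (exists2 w, w \notin Y & e z w) & connected_on e (Y :\ z)].
  exact: (H _ z x zY xY (leqnn _)).
elim=> [|n IH] {z zY x xY} z x zY xY.
  rewrite leqn0 => /eqP /cards0_eq C0.
  by have := in_set0 x; rewrite -C0 inE connect0.
move=> cn.
have [z' z'C [w wY z'w]] := subA zY xY exw.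
have z'Y := comp_in xY z'C.
have z'Y0 : z' \in Y by move: z'Y; rewrite inE => /andP [].
case: (classic (connected_on e (Y :\ z'))) => cz'.
  by exists z'; split => //; exists w.
have [y yY pr] := subB cY zY xY z'C cz'.
apply: (IH z' y z'Y0 yY).
have := proper_card pr; lia.
Qed.

Lemma grow k : 0 < k -> k < #|T| ->
  exists W : {set T}, [/\ #|W| = k, connected_on e W & connected_on e (~: W)].
Proof.
case: two => n3 conn cut.
elim: k => [//|k IH] _ lt.
case: (posnP k) => [k0|kpos].
  subst k.
  have [v _] : exists v, v \in [set: T] by apply/set0Pn; rewrite -card_gt0 cardsT; lia.
  exists [set v]; split.
  - by rewrite cards1.
  - by move=> x y; rewrite !inE => /eqP -> /eqP ->; rewrite connect0.
  - exact: cut.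
have [W [cW conW conC]] := IH kpos (ltnW lt).
have [z [zY [w wY zw] conZ]] : exists z, [/\ z \in ~: W, (exists2 w, w \notin ~: W & e z w)
      & connected_on e (~: W :\ z)].
  apply: claim => //.
    have [w0 w0W] : exists w0, w0 \in W by apply/set0Pn; rewrite -card_gt0; lia.
    by exists w0; rewrite inE w0W.
  have := cardsC W; lia.
have wW : w \in W by move: wY; rewrite inE negbK.
have zW : z \notin W by move: zY; rewrite inE.
exists (z |: W); split.
- by rewrite cardsU1 zW cW.
- have tow : forall x, x \in z |: W -> connect (induced e (z |: W)) x w.
    move=> x; rewrite !inE => /orP [/eqP -> | xW].
      by apply: connect1; rewrite /induced /= !inE eqxx wW zw orbT.
    apply: (connect_mono _ (conW x w xW wW)).
    by apply/subsetP => u uW; rewrite !inE uW orbT.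
  move=> x y xin yin; apply: connect_trans (tow x xin) _.
  by rewrite csym; apply: tow.
- have -> : ~: (z |: W) = ~: W :\ z.
    by apply/setP => u; rewrite !inE negb_or andbC.
  exact: conZ.
Qed.

End G.

Section F.
Variables (T : finType) (e : rel T).
Hypothesis esym : symmetric e.
Hypothesis eirr : irreflexive e.
Hypothesis two : two_connected e.
Variable g : nat.
Hypothesis gir : is_girth e g.
Variable W : {set T}.
Hypothesis Wconn : connected_on e W.
Hypothesis Wsize : #|W| + 2 <= g.
Implicit Types (A B C X Y F : {set T}) (x y z : T).

Lemma uniq_size_card A (s : seq T) : uniq s -> {subset s <= A} -> size s <= #|A|.
Proof.
move=> us sA; rewrite -(card_uniqP us); apply: subset_leq_card.
by apply/subsetP.
Qed.

Lemma cyc_small s : is_cycle e s -> size s <= #|W| + 1 -> False.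
Proof. move=> cs; have := gir.2 s cs; lia. Qed.

Lemma SL x a b : x \notin W -> a \in W -> b \in W -> a != b -> e x a -> e x b -> False.
Proof.
move=> xW aW bW ab xa xb.
have /connectP [p pth lp] := Wconn aW bW.
case: (shortenP pth) lp => p' pth' up' _ lp.
have allW := path_in pth'.
apply: (@cyc_small (x :: a :: p')).
  split.
  - case: p' {pth' up' allW} lp => [|? ?] /=; last by [].
    by move=> ba; rewrite ba eqxx in ab.
  - rewrite /= in up' *; rewrite up' andbT.
    rewrite inE negb_or; apply/andP; split.
      by apply/negP => /eqP xa'; rewrite xa' aW in xW.
    apply/negP => xp; move/allP: allW => /(_ x xp) xW2; by move/negP: xW.
  - rewrite /cycle /= xa /= rcons_path -lp esym xb andbT.
    by apply: sub_path pth' => u v /and3P [].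
have h : size (a :: p') <= #|W|.
  apply: (uniq_size_card up') => u; rewrite inE => /orP [/eqP -> //|].
  by move/allP: allW => H /H.
move: h => /=; lia.
Qed.

Lemma cyc_of x p1 c p2 d : path e x (p1 ++ c :: p2) -> uniq (x :: p1 ++ c :: p2) ->
  e x c -> d \in p1 -> is_cycle e (x :: rcons p1 c).
Proof.
move=> pth up xc dp; split.
- by case: p1 {pth up} dp => //= ? ?; rewrite size_rcons.
- have : uniq ((x :: rcons p1 c) ++ p2) by rewrite cat_cons cat_rcons.
  by rewrite cat_uniq => /andP [].
- rewrite /cycle rcons_path last_rcons esym xc andbT rcons_path.
  by move: pth; rewrite cat_path /= => /and3P [-> -> _].
Qed.

Lemma MD F : F \subset W -> (exists x0, x0 \in F) ->
  (forall y, y \in F -> exists a b, [/\ a \in F, b \in F, a != b, e y a & e y b]) -> False.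
Proof.
move=> /subsetP FW [x0 x0F] deg.
have nocyc : forall s, is_cycle e s -> {subset s <= F} -> False.
  move=> s cs sF; apply: (cyc_small cs).
  have := uniq_size_card (A := F) (let: And3 _ u _ := cs in u) sF.
  have := subset_leq_card (introT subsetP FW); lia.
suff H : forall m, exists x p, [/\ x \in F, {subset p <= F}, uniq (x :: p), path e x p & size p = m].
  have [x [p [xF pF up _ sz]]] := H #|F|.
  have sF : {subset x :: p <= F}.
    by move=> u; rewrite inE => /orP [/eqP -> //|]; exact: pF.
  by have := uniq_size_card up sF; rewrite /= sz ltnn.
elim=> [|m [x [p [xF pF up pth sz]]]]; first by exists x0, [::].
have [a [b [aF bF ab xa xb]]] := deg x xF.
have ext : forall c, c \in F -> e x c -> c \notin x :: p ->
    exists x p, [/\ x \in F, {subset p <= F}, uniq (x :: p), path e x p & size p = m.+1].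
  move=> c cF xc cn; exists c, (x :: p); split => //.
  - by move=> u; rewrite inE => /orP [/eqP -> //|]; exact: pF.
  - by rewrite /= cn.
  - by rewrite /= esym xc.
  - by rewrite /= sz.
case: (boolP (a \in x :: p)) => ain; last exact: (ext a aF xa ain).
case: (boolP (b \in x :: p)) => bin; last exact: (ext b bF xb bin).
exfalso.
have ap : a \in p.
  move: ain; rewrite inE => /orP [/eqP ax|//]; by rewrite ax eirr in xa.
have bp : b \in p.
  move: bin; rewrite inE => /orP [/eqP bx|//]; by rewrite bx eirr in xb.
have sub : forall q, {subset q <= p} -> {subset x :: q <= F}.
  by move=> q qp u; rewrite inE => /orP [/eqP -> //|/qp]; exact: pF.
move: pF up pth sub bp; case/splitPr: ap => p1 p2 pF up pth sub.
rewrite mem_cat inE eq_sym (negbTE ab) /= => /orP [bp1|bp2].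
  apply: (nocyc _ (cyc_of pth up xa bp1)).
  apply: sub => u; rewrite mem_rcons inE mem_cat inE => /orP [/eqP ->|->] //.
  by rewrite eqxx orbT.
move: pF up pth sub; case/splitPr: bp2 => q1 q2.
rewrite -cat_cons catA => pF up pth sub.
have ainq : a \in p1 ++ a :: q1 by rewrite mem_cat inE eqxx orbT.
apply: (nocyc _ (cyc_of pth up xb ainq)).
apply: sub => u; rewrite mem_rcons inE !mem_cat => /orP [/eqP ->|/orP [->|]] //.
  by rewrite mem_head orbT.
by move=> ->; rewrite orbT.
Qed.

Lemma progress X : ~: W \subset X -> X != [set: T] ->
  exists v, v \in force_step e X /\ v \notin X.
Proof.
move=> /subsetP SX XT.
have [v0 v0X] : exists v, v \notin X.
  apply: NNPP => H; move/negP: XT; apply; apply/eqP/setP => u; rewrite inE.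
  by apply: NNPP => uX; apply: H; exists u; apply/negP.
case: (classic (exists v, v \in force_step e X /\ v \notin X)) => // H; exfalso.
have nonforce : forall u v, u \in X -> v \notin X -> e u v ->
    exists w, [/\ e u w, w \notin X & w != v].
  move=> u v uX vX uv; apply: NNPP => Hn; apply: H; exists v; split => //.
  rewrite /force_step !inE (negbTE vX) /=; apply/existsP; exists u.
  rewrite uX uv /=; apply/forallP => w; apply/implyP => uw.
  case: (boolP (w \in X)) => //= wX; apply: NNPP => wv; apply: Hn; exists w.
  by split => //; apply/negP.
have inW : forall u, u \notin X -> u \in W.
  by move=> u uX; apply: NNPP => /negP uW; move/negP: uX; apply; apply: SX; rewrite inE.
set F := [set y | (y \in W) && ((y \notin X) || [exists v, (v \notin X) && e y v])].
have inF : forall u, u \notin X -> u \in F by move=> u uX; rewrite inE inW //= uX.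
apply: (@MD F).
- by apply/subsetP => u; rewrite inE => /andP [].
- by exists v0; apply: inF.
move=> y; rewrite inE => /andP [yW]; case: (boolP (y \in X)) => /= yX;
  last first.
  have [a [b [ab ya yb]]] := deg2 eirr two y.
  have nbF : forall n, e y n -> n \in F.
    move=> n yn; case: (boolP (n \in X)) => nX; last exact: inF.
    have ny : e n y by rewrite esym.
    have [w [nw wX wy]] := nonforce n y nX yX ny.
    have nW : n \in W.
      apply: NNPP => /negP nW.
      have yw : y != w by rewrite eq_sym.
      by apply: (SL nW (inW y yX) (inW w wX) yw ny nw).
    rewrite inE nW /=; apply/orP; right; apply/existsP; exists y; by rewrite yX.
  by exists a, b; split => //; apply: nbF.
move=> /existsP [v /andP [vX yv]].
have [w [yw wX wv]] := nonforce y v yX vX yv.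
by exists v, w; split => //; [apply: inF | apply: inF | rewrite eq_sym].
Qed.

Lemma closure_full : Defs.closure e (~: W) = [set: T].
Proof.
set fs := force_step e.
have step : forall X, X \subset fs X by move=> X; apply: subsetUl.
have inv : forall i, ~: W \subset iter i fs (~: W) /\
   (iter i fs (~: W) = [set: T] \/ i <= #|iter i fs (~: W)|).
  elim=> [|i [sub H]] /=; first by split => //; right.
  set X := iter i fs (~: W) in sub H *.
  split; first exact: subset_trans sub (step X).
  case: (eqVneq X [set: T]) => [XT|XnT].
    left; apply/eqP; rewrite eqEsubset subsetT /= -{1}XT; exact: step.
  right; have [v [vF vX]] := progress sub XnT.
  have : X \proper fs X by apply/properP; split; [exact: step | exists v].
  move/proper_card; case: H => [XT'|le lt]; first by rewrite XT' eqxx in XnT.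
  exact: leq_ltn_trans le lt.
have [_ [//|le]] := inv #|T|.
apply/eqP; rewrite eqEcard subsetT cardsT; exact: le.
Qed.

End F.

Unset Implicit Arguments.
Theorem theorem3 (T : finType) (e : rel T) (g : nat) :
  simple_graph e -> two_connected e -> is_girth e g ->
  exists S : {set T}, connected_forcing_set e S /\ #|S| <= #|T| - g + 2.
Proof.
move=> [esym eirr] two gir.
have [[s [[s3 us cs] sz]] _] := gir.
have gn : g <= #|T| by rewrite -sz -(card_uniqP us) max_card.
have k0 : 0 < g - 2 by lia.
have k1 : g - 2 < #|T| by lia.
have [W [cW connW connC]] := grow esym two k0 k1.
exists (~: W); split.
  split => //; rewrite /forcing_set.
  apply: (closure_full esym eirr two gir connW); lia.
have := cardsC W; lia.
Qed.
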